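(* Let $f(z):=\sum_{j=0}^\infty p_j\frac{z^j}{j!}$ with complex $p_j$ satisfying $|p_j|\le(j+2)^{-2}$ for all $j\ge0$, let $n\in\mathbb{N}$ and $N=2n+1$. For each $n\ge1$ there exist pairwise distinct complex numbers $\lambda_1,\dots,\lambda_N$ with $|\lambda_k|=1$ such that for every $r\in(0,1)$, \[\left|\sum_{k=1}^N\lambda_ke^{\lambda_kz}-f(z)\right|\le\frac{|z|^n}{n!}\frac{15}{1-r^{n+1}}\left(n+\frac{2}{1-r}\right)\left(1+\frac{|z|e^{|z|/r}}{rn+r}\right)\qquad\text{for all }z\in\mathbb{C}.\] *)

(* Defs.v *)
From Stdlib Require Import Reals Arith Factorial.
From Coquelicot Require Import Coquelicot.

Definition Cexp (z : C) : C :=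
  (exp (Re z) * cos (Im z), exp (Re z) * sin (Im z))%R.

(* f(z) = sum_{j>=0} p_j z^j / j!, computed componentwise
   (the series converges absolutely when p is bounded). *)
Definition fser (p : nat -> C) (z : C) : C :=
  (Series (fun j => Re (p j * Cpow z j / INR (fact j))%C),
   Series (fun j => Im (p j * Cpow z j / INR (fact j))%C)).

(* Main.v *)
Require Import Defs.
From Stdlib Require Import Reals Arith Factorial.
From Coquelicot Require Import Coquelicot.
From Stdlib Require Import Lra Lia.
Open Scope R_scope.

Fixpoint csum (f : nat -> C) (k : nat) : C :=
  match k with O => RtoC 0 | S k => Cplus (csum f k) (f k) end.
Fixpoint rsum (f : nat -> R) (k : nat) : R :=
  match k with O => 0 | S k => rsum f k + f k end.

Lemma csum_ext f g K : (forall i, (i < K)%nat -> f i = g i) -> csum f K = csum g K.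
Proof. induction K; simpl; intros H; auto. rewrite IHK, H; auto. Qed.
Lemma rsum_ext f g K : (forall i, (i < K)%nat -> f i = g i) -> rsum f K = rsum g K.
Proof. induction K; simpl; intros H; auto. rewrite IHK, H; auto. Qed.
Lemma rsum_le f g K : (forall i, (i < K)%nat -> f i <= g i) -> rsum f K <= rsum g K.
Proof. induction K; simpl; intros H; [lra|]. assert (H1 := H K (Nat.lt_succ_diag_r K)). assert (rsum f K <= rsum g K) by (apply IHK; auto). lra. Qed.
Lemma rsum_nonneg f K : (forall i, (i < K)%nat -> 0 <= f i) -> 0 <= rsum f K.
Proof. intros H. replace 0 with (rsum (fun _ => 0) K). apply rsum_le; auto. induction K; simpl; auto; rewrite IHK; [lra| auto]. Qed.
Lemma rsum_plus f g K : rsum (fun i => f i + g i) K = rsum f K + rsum g K.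
Proof. induction K; simpl; lra. Qed.
Lemma rsum_scal c f K : rsum (fun i => c * f i) K = c * rsum f K.
Proof. induction K; simpl; [ring|]. rewrite IHK; ring. Qed.
Lemma rsum_shift f K : rsum f (S K) = f O + rsum (fun j => f (S j)) K.
Proof. induction K; simpl in *; [lra|]. rewrite IHK; lra. Qed.
Lemma Cmod_csum f K : Cmod (csum f K) <= rsum (fun i => Cmod (f i)) K.
Proof. induction K; simpl. rewrite Cmod_0; lra. eapply Rle_trans; [apply Cmod_triangle|]. lra. Qed.

Fixpoint apre (p : nat -> C) (k : nat) : nat -> C :=
  match k with
  | O => fun i => match i with O => RtoC 1 | _ => RtoC 0 end
  | S k' => fun i => if Nat.eqb i (S k') then
        Cmult (RtoC (- / INR (S k'))) (csum (fun m => Cmult (p m) (apre p k' (k' - m))) (S k'))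
      else apre p k' i
  end.
Definition aseq p k := apre p k k.

Lemma apre_S p k i : apre p (S k) i = if Nat.eqb i (S k) then
        Cmult (RtoC (- / INR (S k))) (csum (fun m => Cmult (p m) (apre p k (k - m))) (S k))
      else apre p k i.
Proof. reflexivity. Qed.

Lemma apre_stable p k i : (i <= k)%nat -> apre p k i = aseq p i.
Proof.
  induction k; intros H.
  - assert (i = O) by lia; subst; reflexivity.
  - destruct (Nat.eq_dec i (S k)) as [->|Hne]; [reflexivity|].
    rewrite apre_S, (proj2 (Nat.eqb_neq _ _) Hne). apply IHk; lia.
Qed.

Lemma aseq_rec p k : aseq p (S k) =
  Cmult (RtoC (- / INR (S k))) (csum (fun m => Cmult (p m) (aseq p (k - m))) (S k)).
Proof.
  unfold aseq at 1; rewrite apre_S, Nat.eqb_refl. f_equal.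
  apply csum_ext; intros i Hi. rewrite apre_stable; auto; lia.
Qed.

Lemma aseq_rec' p k :
  Cplus (Cmult (RtoC (INR (S k))) (aseq p (S k)))
        (csum (fun m => Cmult (p m) (aseq p (k - m))) (S k)) = RtoC 0.
Proof.
  rewrite aseq_rec. destruct (csum _ _) as [s1 s2].
  assert (INR (S k) <> 0) by (apply not_0_INR; lia).
  unfold Cmult, Cplus, RtoC; simpl. apply injective_projections; simpl; field; auto.
Qed.

Lemma aseq0 p : aseq p O = RtoC 1.
Proof. reflexivity. Qed.

Section Bound.
Variable p : nat -> C.
Hypothesis hp : forall j : nat, Cmod (p j) <= / (INR j + 2) ^ 2.
Let alpha j := Cmod (aseq p j).
Let gam m := / (INR m + 2) ^ 2.
Let T i := rsum alpha (S i).
Let W K := rsum (fun j => INR j * alpha j) (S K).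

Lemma alpha_nonneg j : 0 <= alpha j.
Proof. apply Cmod_ge_0. Qed.
Lemma gam_pos m : 0 < gam m.
Proof. unfold gam. apply Rinv_0_lt_compat. apply pow_lt. pose proof (pos_INR m). lra. Qed.

Lemma step_ii k : INR (S k) * alpha (S k) <= rsum (fun m => gam m * alpha (k - m)%nat) (S k).
Proof.
  assert (H := aseq_rec' p k).
  set (s := csum _ _) in H.
  assert (E : Cmult (RtoC (INR (S k))) (aseq p (S k)) = Copp s).
  { replace (Copp s) with (Cplus (Copp s) (RtoC 0)) by ring. rewrite <- H. ring. }
  assert (E2 : INR (S k) * alpha (S k) = Cmod s).
  { unfold alpha. rewrite <- (Cmod_opp s), <- E, Cmod_mult, Cmod_R, Rabs_pos_eq; auto. apply pos_INR. }
  rewrite E2. eapply Rle_trans; [apply Cmod_csum|]. apply rsum_le. intros i Hi.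
  rewrite Cmod_mult. apply Rmult_le_compat_r; [apply alpha_nonneg| apply hp].
Qed.

Lemma T_succ i : T (S i) = T i + alpha (S i).
Proof. reflexivity. Qed.

Lemma W_succ K : W (S K) = W K + INR (S K) * alpha (S K).
Proof. reflexivity. Qed.

Lemma T_mono i j : (i <= j)%nat -> T i <= T j.
Proof. induction 1; [lra|]. rewrite T_succ. pose proof (alpha_nonneg (S m)). lra. Qed.

Lemma claim_split K : rsum (fun m => gam m * T (K - m)%nat) (S K) =
   rsum (fun m => gam m * T (K - S m)%nat) K + rsum (fun m => gam m * alpha (K - m)%nat) (S K).
Proof.
  simpl rsum at 1 3. rewrite Nat.sub_diag.
  rewrite (rsum_ext (fun m => gam m * T (K - m)%nat)
     (fun m => gam m * T (K - S m)%nat + gam m * alpha (K - m)%nat)).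
  - rewrite rsum_plus. assert (T 0 = alpha 0) by (unfold T; simpl; lra). rewrite H. lra.
  - intros i Hi. replace (K - i)%nat with (S (K - S i)) by lia. rewrite T_succ.
    replace (S (K - S i)) with (K - i)%nat by lia. ring.
Qed.

Lemma claim1 K : W K <= rsum (fun m => gam m * T (K - S m)%nat) K.
Proof.
  induction K.
  - unfold W; simpl. lra.
  - rewrite W_succ.
    replace (rsum (fun m => gam m * T (S K - S m)%nat) (S K)) with
      (rsum (fun m => gam m * T (K - m)%nat) (S K)) by (apply rsum_ext; intros; f_equal).
    rewrite claim_split. pose proof (step_ii K). lra.
Qed.

Lemma claim2 K : (1 <= K)%nat -> 2 * (T K - 1) - alpha 1 <= W K.
Proof.
  induction 1.
  - unfold W, T; simpl. unfold alpha at 1 4. rewrite aseq0, Cmod_1. lra.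
  - rewrite W_succ, T_succ.
    pose proof (alpha_nonneg (S m)).
    assert (2 <= INR (S m)) by (rewrite S_INR; apply le_INR in H; simpl in H; lra).
    assert (2 * alpha (S m) <= INR (S m) * alpha (S m)) by (apply Rmult_le_compat_r; lra).
    lra.
Qed.

Lemma claim3 K : rsum gam K <= 2/3 - 2 / (2 * INR K + 3).
Proof.
  induction K.
  - simpl. lra.
  - simpl rsum. rewrite S_INR.
    pose proof (pos_INR K) as HK. set (x := INR K) in *.
    assert (E : 2 / (2 * x + 3) - 2 / (2 * (x + 1) + 3) - gam K =
               / ((2 * x + 3) * (2 * x + 5) * (x + 2) ^ 2)).
    { unfold gam; fold x. field. repeat split; try lra. }
    assert (0 < / ((2 * x + 3) * (2 * x + 5) * (x + 2) ^ 2)).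
    { apply Rinv_0_lt_compat. apply Rmult_lt_0_compat; [nra| apply pow_lt; lra]. }
    lra.
Qed.

Lemma claim4 K : rsum (fun m => gam m * T (K - S m)%nat) K <= 2/3 * T K.
Proof.
  apply Rle_trans with (rsum (fun m => T K * gam m) K).
  - apply rsum_le; intros i Hi. rewrite Rmult_comm. apply Rmult_le_compat_r.
    + left; apply gam_pos.
    + apply T_mono; lia.
  - rewrite rsum_scal. pose proof (claim3 K).
    assert (0 <= T K) by (apply rsum_nonneg; intros; apply alpha_nonneg).
    assert (0 < 2 / (2 * INR K + 3)).
    { pose proof (pos_INR K). apply Rdiv_lt_0_compat; lra. }
    nra.
Qed.

Lemma alpha1 : alpha 1 <= / 4.
Proof.
  pose proof (step_ii 0). simpl in H. unfold gam in H. simpl in H.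
  unfold alpha in H at 2. rewrite aseq0, Cmod_1 in H. lra.
Qed.

Lemma a_bound K : (1 <= K)%nat -> rsum (fun j => Cmod (aseq p (S j))) K <= 11/16.
Proof.
  intros HK. pose proof (claim1 K). pose proof (claim2 K HK). pose proof (claim4 K).
  pose proof alpha1.
  assert (E : T K = 1 + rsum (fun j => Cmod (aseq p (S j))) K).
  { unfold T. rewrite rsum_shift. unfold alpha at 1. rewrite aseq0, Cmod_1. reflexivity. }
  lra.
Qed.
End Bound.


Lemma cis_pow t j : Cpow (cos t, sin t) j = (cos (INR j * t), sin (INR j * t)).
Proof.
  induction j.
  - simpl. rewrite Rmult_0_l, cos_0, sin_0. reflexivity.
  - simpl Cpow. rewrite IHj, S_INR.
    replace ((INR j + 1) * t) with (t + INR j * t) by ring.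
    rewrite cos_plus, sin_plus. unfold Cmult; simpl. apply injective_projections; simpl; ring.
Qed.

Lemma term_id (a : C) (N j : nat) (t : R) : (j <= N)%nat ->
  Cplus (Cmult a (Cpow (cos t, sin t) j)) (Cmult (Cconj a) (Cpow (cos t, sin t) (N - j))) =
  Cmult (cos (INR N / 2 * t), sin (INR N / 2 * t))
    (RtoC (2 * (Re a * cos ((INR N - 2 * INR j) / 2 * t) + Im a * sin ((INR N - 2 * INR j) / 2 * t)))).
Proof.
  intros Hj. rewrite !cis_pow, minus_INR by auto.
  set (A := INR N / 2 * t). set (B := (INR N - 2 * INR j) / 2 * t).
  replace (INR j * t) with (A - B) by (unfold A, B; field).
  replace ((INR N - INR j) * t) with (A + B) by (unfold A, B; field).
  rewrite cos_minus, sin_minus, cos_plus, sin_plus.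
  destruct a as [x y]. unfold Cplus, Cmult, Cconj, RtoC, Re, Im; simpl.
  apply injective_projections; simpl; ring.
Qed.

Lemma csum_scal_R (E : C) (g : nat -> R) K :
  csum (fun j => Cmult E (RtoC (2 * g j))) K = Cmult E (RtoC (2 * rsum g K)).
Proof.
  induction K; simpl.
  - destruct E as [e1 e2]. unfold Cmult, RtoC; simpl. apply injective_projections; simpl; ring.
  - rewrite IHK. destruct E as [e1 e2]. unfold Cmult, Cplus, RtoC; simpl.
    apply injective_projections; simpl; ring.
Qed.

Lemma cont_rsum (g : nat -> R -> R) K : (forall j, continuity (g j)) ->
  continuity (fun t => rsum (fun j => g j t) K).
Proof.
  intros Hg. induction K; simpl.
  - apply continuity_const. intros x y; reflexivity.
  - change (continuity (plus_fct (fun t => rsum (fun j => g j t) K) (g K))).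
    apply continuity_plus; auto.
Qed.

Lemma abs_lin_le x y t : Rabs (x * cos t + y * sin t) <= Cmod (x, y).
Proof.
  unfold Cmod; simpl. rewrite <- sqrt_Rsqr_abs. apply sqrt_le_1_alt.
  pose proof (sin2_cos2 t). unfold Rsqr in *.
  pose proof (Rle_0_sqr (x * sin t - y * cos t)). unfold Rsqr in *. simpl.
  nra.
Qed.

Lemma Rabs_rsum f K : Rabs (rsum f K) <= rsum (fun j => Rabs (f j)) K.
Proof.
  induction K; simpl. rewrite Rabs_R0; lra.
  eapply Rle_trans; [apply Rabs_triang|]. lra.
Qed.

Lemma cos_kPI k : cos (INR k * PI) = (-1) ^ k.
Proof.
  induction k.
  - simpl. rewrite Rmult_0_l, cos_0. reflexivity.
  - rewrite S_INR. replace ((INR k + 1) * PI) with (INR k * PI + PI) by ring.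
    rewrite neg_cos, IHk. simpl. ring.
Qed.

Lemma cis_inj t t' : 0 <= t -> t < t' -> t' < t + 2 * PI -> (cos t, sin t) <> (cos t', sin t').
Proof.
  intros H1 H2 H3 E. injection E as Ec Es.
  assert (Hs : sin (t' - t) = 0) by (rewrite sin_minus, Ec, Es; ring).
  assert (Hc : cos (t' - t) = 1).
  { rewrite cos_minus, <- Ec, <- Es. pose proof (sin2_cos2 t). unfold Rsqr in *. lra. }
  destruct (sin_eq_0_0 _ Hs) as [k Hk].
  pose proof PI_RGT_0.
  assert (0 < IZR k) by (apply (Rmult_lt_reg_r PI); lra).
  assert (IZR k < 2) by (apply (Rmult_lt_reg_r PI); lra).
  apply lt_IZR in H0. apply lt_IZR in H4.
  assert (k = 1%Z) by lia. subst k. rewrite Hk, Rmult_1_l, cos_PI in Hc. lra.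
Qed.

Section Roots.
Variable n : nat.
Variable a : nat -> C.
Hypothesis ha0 : a O = RtoC 1.
Hypothesis hU : rsum (fun j => Cmod (a (S j))) n <= 11/16.

Let N := (2 * n + 1)%nat.
Let Nr := INR N.
Lemma Nr_pos : 0 < Nr.
Proof. unfold Nr. apply lt_0_INR. unfold N. lia. Qed.

Definition gterm (j : nat) (t : R) :=
  Re (a j) * cos ((Nr - 2 * INR j) / 2 * t) + Im (a j) * sin ((Nr - 2 * INR j) / 2 * t).
Definition G (t : R) := rsum (fun j => gterm j t) (S n).

Lemma G_cont : continuity G.
Proof.
  unfold G. apply cont_rsum. intros j. unfold gterm.
  apply derivable_continuous. intro t. apply ex_derive_Reals_0. auto_derive. auto.
Qed.

Lemma G_root_sum (t : R) :
  csum (fun j => Cplus (Cmult (a j) (Cpow (cos t, sin t) j))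
                       (Cmult (Cconj (a j)) (Cpow (cos t, sin t) (N - j)))) (S n) =
  Cmult (cos (Nr / 2 * t), sin (Nr / 2 * t)) (RtoC (2 * G t)).
Proof.
  unfold G. rewrite <- csum_scal_R. apply csum_ext. intros j Hj.
  rewrite term_id by (unfold N; lia). reflexivity.
Qed.

Definition tk (k : nat) := 2 * PI * INR k / Nr.

Lemma G_sign k : 0 < (-1) ^ k * G (tk k).
Proof.
  unfold G. rewrite rsum_shift.
  assert (E0 : gterm 0 (tk k) = (-1) ^ k).
  { unfold gterm. rewrite ha0. unfold Re, Im, RtoC; simpl.
    replace ((Nr - 2 * 0) / 2 * tk k) with (INR k * PI).
    - rewrite cos_kPI. ring.
    - unfold tk. pose proof Nr_pos. field. lra. }
  rewrite E0.
  assert (Hr : Rabs (rsum (fun j => gterm (S j) (tk k)) n) <= 11/16).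
  { eapply Rle_trans; [|apply hU].
    eapply Rle_trans; [apply Rabs_rsum|]. apply rsum_le. intros i Hi.
    unfold gterm. destruct (a (S i)) as [x y]. apply abs_lin_le. }
  assert (Hs : (-1) ^ k * (-1) ^ k = 1).
  { rewrite <- Rpow_mult_distr. replace (-1 * -1) with 1 by ring. apply pow1. }
  assert (Habs : Rabs ((-1) ^ k) = 1).
  { rewrite <- RPow_abs, Rabs_m1, pow1. reflexivity. }
  rewrite Rmult_plus_distr_l, Hs.
  assert (Rabs ((-1) ^ k * rsum (fun j => gterm (S j) (tk k)) n) <= 11/16).
  { rewrite Rabs_mult, Habs, Rmult_1_l. auto. }
  apply Rabs_le_between in H. lra.
Qed.

Lemma tk_mono k k' : (k <= k')%nat -> tk k <= tk k'.
Proof.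
  intros H. unfold tk. pose proof Nr_pos. pose proof PI_RGT_0. apply le_INR in H.
  unfold Rdiv. apply Rmult_le_compat_r; [left; apply Rinv_0_lt_compat; lra|]. nra.
Qed.

Lemma tk_lt k : tk k < tk (S k).
Proof.
  unfold tk. pose proof Nr_pos. pose proof PI_RGT_0. rewrite S_INR.
  unfold Rdiv. apply Rmult_lt_compat_r; [apply Rinv_0_lt_compat; lra|]. nra.
Qed.

Lemma G_prod k : G (tk k) * G (tk (S k)) <= 0.
Proof.
  pose proof (G_sign k) as H1. pose proof (G_sign (S k)) as H2.
  set (s := (-1) ^ k) in *. replace ((-1) ^ S k) with (- s) in H2 by (unfold s; simpl; ring).
  assert (Hs : s * s = 1).
  { unfold s. rewrite <- Rpow_mult_distr. replace (-1 * -1) with 1 by ring. apply pow1. }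
  set (g1 := G (tk k)) in *. set (g2 := G (tk (S k))) in *.
  replace (g1 * g2) with (- ((s * g1) * (- s * g2))) by (rewrite <- (Rmult_1_l (g1 * g2)), <- Hs; ring).
  assert (0 < (s * g1) * (- s * g2)) by (apply Rmult_lt_0_compat; auto).
  lra.
Qed.

Definition theta (k : nat) : R :=
  proj1_sig (IVT_cor G (tk k) (tk (S k)) G_cont (Rlt_le _ _ (tk_lt k)) (G_prod k)).

Lemma theta_spec k : tk k < theta k < tk (S k) /\ G (theta k) = 0.
Proof.
  unfold theta. destruct (IVT_cor _ _ _ _ _ _) as [x [[Hx1 Hx2] Hx3]]; simpl.
  split; [|auto]. pose proof (G_sign k). pose proof (G_sign (S k)).
  split.
  - destruct Hx1 as [Hx1|Hx1]; auto. subst x. rewrite Hx3 in H. lra.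
  - destruct Hx2 as [Hx2|Hx2]; auto. subst x. rewrite Hx3 in H0. lra.
Qed.

Lemma theta_lt k k' : (k < k')%nat -> theta k < theta k'.
Proof.
  intros H. destruct (theta_spec k) as [[_ H1] _]. destruct (theta_spec k') as [[H2 _] _].
  pose proof (tk_mono (S k) k' H). lra.
Qed.

Lemma theta_range k : (k < N)%nat -> 0 < theta k < 2 * PI.
Proof.
  intros H. destruct (theta_spec k) as [[H1 H2] _].
  pose proof (tk_mono 0 k (Nat.le_0_l k)). pose proof (tk_mono (S k) N H).
  assert (tk 0 = 0) by (unfold tk; simpl; field; pose proof Nr_pos; lra).
  assert (tk N = 2 * PI) by (unfold tk; fold Nr; field; pose proof Nr_pos; lra).
  lra.
Qed.

Definition mu (k : nat) : C := (cos (theta k), sin (theta k)).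
Definition lamf (k : nat) : C := Cconj (mu (k - 1)).

Lemma lamf_root k :
  csum (fun j => Cplus (Cmult (a j) (Cpow (Cconj (lamf k)) j))
                       (Cmult (Cconj (a j)) (Cpow (Cconj (lamf k)) (N - j)))) (S n) = RtoC 0.
Proof.
  unfold lamf. rewrite Cconj_conj. unfold mu. rewrite G_root_sum.
  destruct (theta_spec (k - 1)) as [_ H]. rewrite H.
  unfold Cmult, RtoC; simpl. apply injective_projections; simpl; ring.
Qed.

Lemma lamf_unit k : Cmult (lamf k) (Cconj (lamf k)) = RtoC 1.
Proof.
  unfold lamf, mu, Cconj, Cmult, RtoC; simpl.
  pose proof (sin2_cos2 (theta (k - 1))). unfold Rsqr in H.
  apply injective_projections; simpl; lra.
Qed.

Lemma lamf_mod k : Cmod (lamf k) = 1.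
Proof.
  unfold lamf, mu, Cconj, Cmod. cbn [fst snd].
  pose proof (sin2_cos2 (theta (k - 1))). unfold Rsqr in H.
  replace (cos (theta (k - 1)) ^ 2 + (- sin (theta (k - 1))) ^ 2) with 1 by (rewrite <- H; ring).
  apply sqrt_1.
Qed.

Lemma lamf_dist i j : (1 <= i <= N)%nat -> (1 <= j <= N)%nat -> i <> j -> lamf i <> lamf j.
Proof.
  intros Hi Hj Hij E. unfold lamf in E.
  assert (E' : mu (i - 1) = mu (j - 1)) by (rewrite <- (Cconj_conj (mu (i-1))), E; apply Cconj_conj).
  unfold mu in E'.
  pose proof (theta_range (i - 1) ltac:(lia)). pose proof (theta_range (j - 1) ltac:(lia)).
  destruct (Nat.lt_gt_cases (i - 1) (j - 1)) as [[Hl|Hl] _]; [lia| |].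
  - pose proof (theta_lt _ _ Hl). apply (cis_inj (theta (i-1)) (theta (j-1))); auto; lra.
  - pose proof (theta_lt _ _ Hl). apply (cis_inj (theta (j-1)) (theta (i-1))); auto; lra.
Qed.
End Roots.


Lemma exp_le_mono x y : x <= y -> exp x <= exp y.
Proof. intros [H|H]; [left; apply exp_increasing; auto| subst; lra]. Qed.

Lemma exp_series x : is_series (fun k => x ^ k / INR (fact k)) (exp x).
Proof.
  eapply is_series_ext; [|apply (is_exp_Reals x)].
  intros k. simpl. rewrite pow_n_pow. unfold scal; simpl. unfold mult; simpl. unfold Rdiv. ring.
Qed.

Lemma ex_series_scal_R c a : ex_series a -> ex_series (fun k => c * a k).
Proof. intros H. exact (ex_series_scal_l c a H). Qed.

Lemma fact_mult_le a k : (fact a * fact k <= fact (a + k))%nat.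
Proof.
  induction k.
  - rewrite Nat.add_0_r. simpl. lia.
  - rewrite Nat.add_succ_r. simpl fact. 
    assert (fact a * fact k * S k <= fact (a + k) * S (a + k))%nat.
    { apply Nat.mul_le_mono; lia. }
    nia.
Qed.

Lemma tail_bound x n : 0 <= x ->
  ex_series (fun k => x ^ (n + k) / INR (fact (n + k))) /\
  Series (fun k => x ^ (n + k) / INR (fact (n + k))) <=
    x ^ n / INR (fact n) + x ^ S n / INR (fact (S n)) * exp x.
Proof.
  intros Hx.
  assert (He : ex_series (fun k => x ^ (n + k) / INR (fact (n + k)))).
  { apply (ex_series_incr_n (fun k => x ^ k / INR (fact k)) n). eexists; apply exp_series. }
  split; auto.
  rewrite Series_incr_1 by auto. rewrite Nat.add_0_r.
  apply Rplus_le_compat_l.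
  rewrite <- (is_series_unique _ _ (exp_series x)).
  rewrite <- Series_scal_l.
  apply Series_le.
  - intros k. split.
    + apply Rmult_le_pos; [apply pow_le; auto| left; apply Rinv_0_lt_compat, INR_fact_lt_0].
    + replace (n + S k)%nat with (S n + k)%nat by lia. rewrite pow_add.
      unfold Rdiv. 
      assert (Hf : INR (fact (S n)) * INR (fact k) <= INR (fact (S n + k))).
      { rewrite <- mult_INR. apply le_INR, fact_mult_le. }
      pose proof (INR_fact_lt_0 (S n)). pose proof (INR_fact_lt_0 k). pose proof (INR_fact_lt_0 (S n + k)).
      assert (0 <= x ^ S n * x ^ k) by (apply Rmult_le_pos; apply pow_le; auto).
      replace (x ^ S n * / INR (fact (S n)) * (x ^ k * / INR (fact k))) with
        ((x ^ S n * x ^ k) * / (INR (fact (S n)) * INR (fact k))) by (field; lra).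
      apply Rmult_le_compat_l; auto.
      apply Rinv_le_contravar; auto. nra.
  - apply ex_series_scal_R. eexists; apply exp_series.
Qed.

Lemma rsum_sum_f f n : (1 <= n)%nat -> rsum f n = sum_f_R0 f (pred n).
Proof.
  intros H. induction H; simpl. lra. rewrite IHle. destruct m; [lia|]. simpl. lra.
Qed.

Lemma series_tail_bound (f : nat -> R) x n : 0 <= x -> (1 <= n)%nat ->
  (forall j, Rabs (f j) <= / 4 * (x ^ j / INR (fact j))) ->
  ex_series f /\
  Rabs (Series f - rsum f n) <= / 4 * (x ^ n / INR (fact n) + x ^ S n / INR (fact (S n)) * exp x).
Proof.
  intros Hx Hn Hf.
  assert (Hex : forall g : nat -> R, (forall j, Rabs (g j) <= / 4 * (x ^ j / INR (fact j))) -> ex_series g).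
  { intros g Hg. apply (ex_series_le g (fun j => / 4 * (x ^ j / INR (fact j)))).
    - intros j. apply Hg.
    - apply (ex_series_scal_R (/4) (fun j => x ^ j / INR (fact j))). eexists; apply exp_series. }
  split; [apply Hex; auto|].
  rewrite (Series_incr_n f n) by (auto; apply Hex; auto).
  rewrite rsum_sum_f by auto.
  replace (sum_f_R0 f (pred n) + Series (fun k => f (n + k)%nat) - sum_f_R0 f (pred n))
    with (Series (fun k => f (n + k)%nat)) by ring.
  destruct (tail_bound x n Hx) as [Hte Htb].
  assert (Ha : ex_series (fun k => Rabs (f (n + k)%nat))).
  { apply (ex_series_incr_n (fun k => Rabs (f k)) n). apply Hex. intros j. rewrite Rabs_Rabsolu. auto. }
  eapply Rle_trans; [apply Series_Rabs; auto|].
  eapply Rle_trans.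
  - apply (Series_le _ (fun k => / 4 * (x ^ (n + k) / INR (fact (n + k))))).
    + intros k; split; [apply Rabs_pos| apply Hf].
    + apply (ex_series_scal_R (/4) (fun k => x ^ (n + k) / INR (fact (n + k)))); auto.
  - rewrite Series_scal_l. apply Rmult_le_compat_l; [lra| auto].
Qed.


Lemma rsum_S f K : rsum f (S K) = rsum f K + f K.
Proof. reflexivity. Qed.

Definition Ef (u w : C) (t : R) : R :=
  exp (t * Re w) * (Re u * cos (t * Im w) - Im u * sin (t * Im w)).

Lemma Ef_derive u w t : is_derive (Ef u w) t (Ef (Cmult u w) w t).
Proof.
  unfold Ef. auto_derive; auto.
  destruct u as [u1 u2]; destruct w as [w1 w2]. unfold Cmult, Re, Im; simpl. ring.
Qed.

Lemma Ef_ext u u' w t : u = u' -> Ef u w t = Ef u' w t.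
Proof. intros ->; reflexivity. Qed.

Lemma Ef_Derive_n u w m t : Derive_n (Ef u w) m t = Ef (Cmult u (Cpow w m)) w t.
Proof.
  revert t; induction m; intros t.
  - simpl. apply Ef_ext. rewrite Cmult_1_r. reflexivity.
  - simpl Derive_n. rewrite (Derive_ext _ _ _ IHm).
    rewrite (is_derive_unique _ _ _ (Ef_derive _ w t)).
    apply Ef_ext. rewrite Cpow_S. ring.
Qed.

Lemma Ef_ex_derive_n u w k t : ex_derive_n (Ef u w) k t.
Proof.
  destruct k; simpl; auto.
  apply (ex_derive_ext (Ef (Cmult u (Cpow w k)) w)).
  - intros s. rewrite Ef_Derive_n. reflexivity.
  - eexists. apply Ef_derive.
Qed.

Lemma Ef_0 v w : Ef v w 0 = Re v.
Proof. unfold Ef. rewrite !Rmult_0_l, exp_0, cos_0, sin_0. ring. Qed.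

Lemma Ef_1 u w : Ef u w 1 = Re (Cmult u (Cexp w)).
Proof. unfold Ef, Cexp, Cmult, Re, Im; simpl. rewrite !Rmult_1_l. ring. Qed.

Lemma Ef_bound v w t : 0 <= t <= 1 -> Rabs (Ef v w t) <= Cmod v * exp (Cmod w).
Proof.
  intros Ht. unfold Ef. rewrite Rabs_mult, Rabs_pos_eq by (left; apply exp_pos).
  rewrite Rmult_comm. apply Rmult_le_compat.
  - apply Rabs_pos.
  - left; apply exp_pos.
  - replace (Re v * cos (t * Im w) - Im v * sin (t * Im w)) with
      (Re v * cos (t * Im w) + (- Im v) * sin (t * Im w)) by ring.
    eapply Rle_trans; [apply abs_lin_le|].
    right. destruct v as [v1 v2]. exact (Cmod_conj (v1, v2)).
  - apply exp_le_mono. pose proof (re_le_Cmod w). pose proof (Rle_abs (Re w)).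
    pose proof (Rabs_pos (Re w)).
    destruct (Rle_dec 0 (Re w)).
    + apply Rle_trans with (Re w); [|lra]. rewrite <- (Rmult_1_l (Re w)) at 2. apply Rmult_le_compat_r; lra.
    + apply Rle_trans with 0; [|apply Rle_trans with (Rabs (Re w)); lra]. nra.
Qed.

Lemma exp_taylor u w n :
  Rabs (Re (Cmult u (Cexp w)) - rsum (fun m => Re (Cmult u (Cpow w m)) / INR (fact m)) n)
  <= Cmod u * (Cmod w ^ n / INR (fact n) + Cmod w ^ S n / INR (fact (S n)) * exp (Cmod w)).
Proof.
  destruct (Taylor_Lagrange (Ef u w) n 0 1 Rlt_0_1 (fun t _ k _ => Ef_ex_derive_n u w k t))
    as [z [Hz E]].
  rewrite <- Ef_1, E.
  replace (sum_f_R0 (fun m => (1 - 0) ^ m / INR (fact m) * Derive_n (Ef u w) m 0) n)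
    with (rsum (fun m => Re (Cmult u (Cpow w m)) / INR (fact m)) (S n)).
  2: { rewrite rsum_sum_f by lia. simpl pred. apply sum_eq. intros i Hi.
       rewrite Ef_Derive_n, Ef_0. rewrite Rminus_0_r, pow1. unfold Rdiv; ring. }
  rewrite rsum_S, Rminus_0_r, pow1, Ef_Derive_n.
  match goal with |- Rabs ?e <= _ => replace e with
    (Re (Cmult u (Cpow w n)) / INR (fact n) + / INR (fact (S n)) * Ef (Cmult u (Cpow w (S n))) w z)
    by (unfold Rdiv; ring) end.
  eapply Rle_trans; [apply Rabs_triang|].
  rewrite Rmult_plus_distr_l. apply Rplus_le_compat.
  - unfold Rdiv. rewrite Rabs_mult, (Rabs_pos_eq (/ _)) by (left; apply Rinv_0_lt_compat, INR_fact_lt_0).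
    rewrite <- Rmult_assoc. apply Rmult_le_compat_r; [left; apply Rinv_0_lt_compat, INR_fact_lt_0|].
    eapply Rle_trans; [apply re_le_Cmod|]. rewrite Cmod_mult, Cmod_pow. lra.
  - rewrite Rabs_mult, (Rabs_pos_eq (/ _)) by (left; apply Rinv_0_lt_compat, INR_fact_lt_0).
    eapply Rle_trans.
    + apply Rmult_le_compat_l; [left; apply Rinv_0_lt_compat, INR_fact_lt_0|]. apply Ef_bound; lra.
    + rewrite Cmod_mult, Cmod_pow. unfold Rdiv. right; ring.
Qed.


Definition XB (x : R) (n : nat) := x ^ n / INR (fact n) + x ^ S n / INR (fact (S n)) * exp x.

Lemma Cmod_le_re_im c : Cmod c <= Rabs (Re c) + Rabs (Im c).
Proof.
  destruct c as [x y]. unfold Cmod, Re, Im; simpl fst; simpl snd.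
  rewrite <- (sqrt_pow2 (Rabs x + Rabs y)) by (pose proof (Rabs_pos x); pose proof (Rabs_pos y); lra).
  apply sqrt_le_1_alt. rewrite <- (pow2_abs x), <- (pow2_abs y).
  pose proof (Rabs_pos x); pose proof (Rabs_pos y). nra.
Qed.

Lemma re_csum f K : Re (csum f K) = rsum (fun j => Re (f j)) K.
Proof. induction K; simpl; auto. rewrite <- IHK. reflexivity. Qed.
Lemma im_csum f K : Im (csum f K) = rsum (fun j => Im (f j)) K.
Proof. induction K; simpl; auto. rewrite <- IHK. reflexivity. Qed.

Lemma re_mult_R X c : Re (Cmult X (RtoC c)) = Re X * c.
Proof. destruct X; unfold Cmult, RtoC, Re; simpl. ring. Qed.
Lemma im_as_re X : Im X = Re (Cmult (0, -1) X).
Proof. destruct X; unfold Cmult, Re, Im; simpl. ring. Qed.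

Lemma re_minus A B : Re (Cminus A B) = Re A - Re B.
Proof. reflexivity. Qed.
Lemma im_minus A B : Im (Cminus A B) = Im A - Im B.
Proof. reflexivity. Qed.

Lemma V_bound u w n :
  Cmod (Cminus (Cmult u (Cexp w))
     (csum (fun m => Cmult (Cmult u (Cpow w m)) (RtoC (/ INR (fact m)))) n))
  <= 2 * (Cmod u * XB (Cmod w) n).
Proof.
  eapply Rle_trans; [apply Cmod_le_re_im|].
  replace (2 * (Cmod u * XB (Cmod w) n)) with (Cmod u * XB (Cmod w) n + Cmod u * XB (Cmod w) n) by ring.
  apply Rplus_le_compat.
  - replace (Re _) with (Re (Cmult u (Cexp w)) - rsum (fun m => Re (Cmult u (Cpow w m)) / INR (fact m)) n).
    + apply exp_taylor.
    + rewrite re_minus, re_csum. f_equal. apply rsum_ext. intros i _.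
      rewrite re_mult_R. unfold Rdiv. reflexivity.
  - set (u' := Cmult (0, -1) u).
    assert (Hu : Cmod u' = Cmod u).
    { unfold u'. rewrite Cmod_mult.
      assert (E1 : Cmod (0, -1) = 1).
      { unfold Cmod; cbn [fst snd]. replace (0 ^ 2 + (-1) ^ 2) with 1 by ring. apply sqrt_1. }
      rewrite E1. ring. }
    rewrite <- Hu.
    replace (Im _) with (Re (Cmult u' (Cexp w)) - rsum (fun m => Re (Cmult u' (Cpow w m)) / INR (fact m)) n).
    + apply exp_taylor.
    + rewrite im_minus, im_csum. f_equal.
      * rewrite im_as_re. unfold u'. f_equal. ring.
      * apply rsum_ext. intros i _. unfold u'.
        destruct u as [u1 u2]. destruct (Cpow w i) as [c1 c2]. unfold Cmult, RtoC, Re, Im; simpl.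
        unfold Rdiv. ring.
Qed.

Lemma im_le_Cmod c : Rabs (Im c) <= Cmod c.
Proof.
  rewrite im_as_re. eapply Rle_trans; [apply re_le_Cmod|]. rewrite Cmod_mult.
  assert (E1 : Cmod (0, -1) = 1).
  { unfold Cmod; cbn [fst snd]. replace (0 ^ 2 + (-1) ^ 2) with 1 by ring. apply sqrt_1. }
  rewrite E1. lra.
Qed.

Lemma RtoC_neq0 x : x <> 0 -> RtoC x <> RtoC 0.
Proof. intros H E. apply H. injection E. auto. Qed.

Section FB.
Variable p : nat -> C.
Hypothesis hp : forall j : nat, Cmod (p j) <= / (INR j + 2) ^ 2.

Lemma T_bound z j : Cmod (p j * Cpow z j / INR (fact j))%C <= / 4 * (Cmod z ^ j / INR (fact j)).
Proof.
  rewrite Cmod_div by (apply RtoC_neq0, INR_fact_neq_0).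
  rewrite Cmod_mult, Cmod_pow, Cmod_R, Rabs_pos_eq by (left; apply INR_fact_lt_0).
  assert (Hp : Cmod (p j) <= / 4).
  { eapply Rle_trans; [apply hp|]. apply Rinv_le_contravar; [lra|].
    pose proof (pos_INR j). simpl. nra. }
  pose proof (INR_fact_lt_0 j). pose proof (pow_le (Cmod z) j (Cmod_ge_0 z)).
  unfold Rdiv. rewrite <- Rmult_assoc. apply Rmult_le_compat_r; [left; apply Rinv_0_lt_compat; auto|].
  apply Rmult_le_compat_r; auto.
Qed.

Lemma fser_bound z n : (1 <= n)%nat ->
  Cmod (Cminus (csum (fun j => (p j * Cpow z j / INR (fact j))%C) n) (fser p z))
  <= / 2 * XB (Cmod z) n.
Proof.
  intros Hn. eapply Rle_trans; [apply Cmod_le_re_im|].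
  rewrite re_minus, im_minus, re_csum, im_csum.
  replace (/ 2 * XB (Cmod z) n) with (/ 4 * XB (Cmod z) n + / 4 * XB (Cmod z) n) by field.
  apply Rplus_le_compat.
  - rewrite Rabs_minus_sym. unfold fser, Re at 2. simpl fst.
    apply (series_tail_bound (fun j => Re (p j * Cpow z j / INR (fact j))%C) (Cmod z) n (Cmod_ge_0 z) Hn).
    intros j. eapply Rle_trans; [apply re_le_Cmod| apply T_bound].
  - rewrite Rabs_minus_sym. unfold fser, Im at 2. simpl snd.
    apply (series_tail_bound (fun j => Im (p j * Cpow z j / INR (fact j))%C) (Cmod z) n (Cmod_ge_0 z) Hn).
    intros j. eapply Rle_trans; [apply im_le_Cmod| apply T_bound].
Qed.
End FB.

Lemma sum_n_m_csum (F : nat -> C) K : sum_n_m F 1 K = csum (fun k => F (S k)) K.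
Proof.
  induction K.
  - rewrite sum_n_m_zero by lia. reflexivity.
  - rewrite sum_n_Sm by lia. rewrite IHK. reflexivity.
Qed.

Lemma csum_plus f g K : csum (fun k => Cplus (f k) (g k)) K = Cplus (csum f K) (csum g K).
Proof. induction K; simpl. ring. rewrite IHK. ring. Qed.

Lemma csum_mult_r f c K : csum (fun k => Cmult (f k) c) K = Cmult (csum f K) c.
Proof. induction K; simpl. ring. rewrite IHK. ring. Qed.

Lemma csum_swap (g : nat -> nat -> C) K M :
  csum (fun k => csum (g k) M) K = csum (fun m => csum (fun k => g k m) K) M.
Proof.
  induction K; simpl.
  - induction M; simpl; auto. rewrite <- IHM. ring.
  - rewrite IHK. rewrite <- csum_plus. reflexivity.
Qed.

Lemma rsum_const c K : rsum (fun _ => c) K = INR K * c.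
Proof. induction K; simpl rsum. simpl; ring. rewrite IHK, S_INR. ring. Qed.

Lemma final_bound (p lam : nat -> C) (n : nat) (z : C) :
  (1 <= n)%nat ->
  (forall j : nat, Cmod (p j) <= / (INR j + 2) ^ 2) ->
  (forall k, (1 <= k <= 2 * n + 1)%nat -> Cmod (lam k) = 1) ->
  (forall m, (m < n)%nat -> csum (fun k => Cpow (lam (S k)) (S m)) (2 * n + 1) = p m) ->
  Cmod (sum_n_m (fun k => (lam k * Cexp (lam k * z))%C) 1 (2 * n + 1) - fser p z)%C
  <= (4 * INR n + 5 / 2) * XB (Cmod z) n.
Proof.
  intros Hn hp Hmod Hps.
  set (N := (2 * n + 1)%nat).
  rewrite sum_n_m_csum.
  set (Q := fun k => csum (fun m => Cmult (Cmult (lam (S k)) (Cpow (Cmult (lam (S k)) z) m))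
                                        (RtoC (/ INR (fact m)))) n).
  set (V := fun k => Cminus (Cmult (lam (S k)) (Cexp (Cmult (lam (S k)) z))) (Q k)).
  rewrite (csum_ext _ (fun k => Cplus (V k) (Q k))) by (intros; unfold V; ring).
  rewrite csum_plus.
  assert (HQ : csum Q N = csum (fun j => (p j * Cpow z j / INR (fact j))%C) n).
  { unfold Q. rewrite csum_swap. apply csum_ext. intros m Hm.
    rewrite (csum_ext _ (fun k => Cmult (Cpow (lam (S k)) (S m))
                                   (Cmult (Cpow z m) (RtoC (/ INR (fact m)))))).
    - rewrite csum_mult_r. unfold N. rewrite Hps by auto.
      unfold Cdiv. rewrite <- RtoC_inv by apply INR_fact_neq_0. ring.
    - intros k Hk. rewrite Cpow_mult_l, Cpow_S. ring. }
  rewrite HQ.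
  replace (Cminus (Cplus (csum V N) (csum (fun j => (p j * Cpow z j / INR (fact j))%C) n)) (fser p z))
    with (Cplus (csum V N) (Cminus (csum (fun j => (p j * Cpow z j / INR (fact j))%C) n) (fser p z)))
    by ring.
  eapply Rle_trans; [apply Cmod_triangle|].
  replace ((4 * INR n + 5 / 2) * XB (Cmod z) n) with
    (INR N * (2 * (1 * XB (Cmod z) n)) + / 2 * XB (Cmod z) n).
  2: { unfold N. rewrite plus_INR, mult_INR. simpl INR. field. }
  apply Rplus_le_compat.
  - eapply Rle_trans; [apply Cmod_csum|]. rewrite <- rsum_const. apply rsum_le.
    intros k Hk. unfold V, Q.
    rewrite <- (Hmod (S k)) by (unfold N in Hk; lia).
    replace (Cmod z) with (Cmod (Cmult (lam (S k)) z)).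
    + apply V_bound.
    + rewrite Cmod_mult, Hmod by (unfold N in Hk; lia). ring.
  - apply fser_bound; auto.
Qed.

Module Alg.
From HB Require Import structures.
From mathcomp Require Import all_boot all_algebra.
From mathcomp Require Import Rstruct.
Set Implicit Arguments. Unset Strict Implicit. Unset Printing Implicit Defensive.
Import GRing.Theory.

Definition CC : Type := C.
HB.instance Definition _ := Choice.copy CC (R * R)%type.

Lemma CC_addA : associative (Cplus : CC -> CC -> CC).
Proof. move=> x y z; by rewrite Cplus_assoc. Qed.
Lemma CC_addC : commutative (Cplus : CC -> CC -> CC).
Proof. move=> x y; by rewrite Cplus_comm. Qed.
Lemma CC_add0 : left_id (RtoC 0 : CC) Cplus.
Proof. move=> x; by rewrite Cplus_0_l. Qed.
Lemma CC_addN : left_inverse (RtoC 0 : CC) Copp Cplus.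
Proof. move=> x; by rewrite Cplus_comm Cplus_opp_r. Qed.
HB.instance Definition _ := GRing.isZmodule.Build CC CC_addA CC_addC CC_add0 CC_addN.
Lemma CC_mulA : associative (Cmult : CC -> CC -> CC).
Proof. move=> x y z; by rewrite Cmult_assoc. Qed.
Lemma CC_mulC : commutative (Cmult : CC -> CC -> CC).
Proof. move=> x y; by rewrite Cmult_comm. Qed.
Lemma CC_mul1 : left_id (RtoC 1 : CC) Cmult.
Proof. move=> x; by rewrite Cmult_1_l. Qed.
Lemma CC_mulD : left_distributive (Cmult : CC -> CC -> CC) Cplus.
Proof. move=> x y z; by rewrite Cmult_plus_distr_r. Qed.
Lemma CC_10 : (RtoC 1 : CC) != RtoC 0.
Proof. apply/eqP; exact: C1_nz. Qed.
HB.instance Definition _ := GRing.Zmodule_isComNzRing.Build CC CC_mulA CC_mulC CC_mul1 CC_mulD CC_10.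
Lemma CC_mulV : forall x : CC, x != 0%R -> (Cmult (Cinv x) x : CC) = 1%R.
Proof. move=> x /eqP H; exact: (Cinv_l x H). Qed.
Lemma CC_inv0 : (Cinv (0%R : CC) : CC) = 0%R.
Proof. rewrite /Cinv /=. apply injective_projections => /=; rewrite /Rdiv; 
  rewrite ?Rmult_0_l //. by rewrite Ropp_0 Rmult_0_l. Qed.
HB.instance Definition _ := GRing.ComNzRing_isField.Build CC CC_mulV CC_inv0.

Lemma csum_big (f : nat -> C) k : csum f k = (\sum_(i < k) (f i : CC))%R.
Proof. elim: k => [|k IH]; first by rewrite big_ord0. by rewrite big_ord_recr /= -IH. Qed.

Lemma Cpow_expr (x : C) m : Cpow x m = ((x : CC) ^+ m)%R.
Proof. elim: m => [|m IH] //=. by rewrite exprS IH. Qed.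

Lemma INR_natr k : RtoC (INR k) = (k%:R : CC)%R.
Proof. elim: k => [|k IH] //. rewrite S_INR RtoC_plus IH mulrSr //. Qed.


From mathcomp Require Import ring.
Local Open Scope ring_scope.

Definition Rl (l : seq CC) : {poly CC} := \prod_(x <- l) (1 - x *: 'X).
Definition psum (l : seq CC) m : CC := \sum_(x <- l) x ^+ m.
Definition ite (r : nat -> CC) (j : nat) : CC := if j == 0%N then 0 else r j.-1.

Lemma coef_Rl_cons mu l i :
  (Rl (mu :: l))`_i = (Rl l)`_i - mu * ite (fun j => (Rl l)`_j) i.
Proof. by rewrite /Rl big_cons mulrBl mul1r coefB -scalerAl coefZ coefXM. Qed.

Lemma tele (mu : CC) (r : nat -> CC) k :
  \sum_(m < k.+1) mu ^+ m.+1 * (r (k - m)%N - mu * ite r (k - m)%N) = mu * r k.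
Proof.
elim: k => [|k IH]; first by rewrite big_ord1 /= /ite /= mulr0 subr0 expr1.
rewrite big_ord_recl /= subn0 /ite /=.
have -> : \sum_(i < k.+1) mu ^+ (bump 0 i).+1 *
   (r (k.+1 - bump 0 i)%N - mu * (if (k.+1 - bump 0 i)%N == 0%N then 0 else r (k.+1 - bump 0 i).-1))
   = mu * \sum_(m < k.+1) mu ^+ m.+1 * (r (k - m)%N - mu * ite r (k - m)%N).
  rewrite mulr_sumr; apply: eq_bigr => i _.
  by rewrite /bump /= add1n subSS exprS mulrA /ite.
rewrite IH expr1; ring.
Qed.

Lemma newton (l : seq CC) k :
  \sum_(m < k.+1) psum l m.+1 * (Rl l)`_(k - m) + k.+1%:R * (Rl l)`_k.+1 = 0.
Proof.
elim: l k => [|mu l IH] k.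
  rewrite /Rl /psum big_nil coef1 /= mulr0 addr0.
  by apply: big1 => i _; rewrite big_nil mul0r.
set r := fun j => (Rl l)`_j.
have Hc : forall i, (Rl (mu :: l))`_i = r i - mu * ite r i by move=> i; exact: coef_Rl_cons.
have Hp : forall m, psum (mu :: l) m = mu ^+ m + psum l m by move=> m; rewrite /psum big_cons.
under eq_bigr => m _ do rewrite Hp Hc mulrDl.
rewrite big_split /= tele Hc.
have HB : \sum_(m < k.+1) psum l m.+1 * ite r (k - m) + k%:R * r k = 0.
  case: k => [|k]; first by rewrite big_ord1 /ite /= mulr0 mul0r addr0.
  rewrite big_ord_recr /= subnn /ite /= mulr0 addr0.
  apply: (eq_trans _ (IH k)).
  congr (_ + _); apply: eq_bigr => i _.
  have hi : (i <= k)%N by rewrite -ltnS.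
  by rewrite subSn // /=.
have HA := IH k.
rewrite /ite /= in HB.
have -> : \sum_(i < k.+1) psum l i.+1 * (r (k - i)%N - mu * ite r (k - i)%N)
   = \sum_(i < k.+1) psum l i.+1 * r (k - i)%N - mu * \sum_(i < k.+1) psum l i.+1 * ite r (k - i)%N.
  rewrite mulr_sumr -sumrB; apply: eq_bigr => i _; ring.
rewrite /ite /=.
move: HA HB; rewrite -/r.
set A := \sum_(i < k.+1) _ .
set B := \sum_(i < k.+1) _ .
move=> HA HB.
have eA : A = - (k.+1%:R * r k.+1) by rewrite -[A]subr0 -HA opprD addrA subrr add0r.
have eB : B = - (k%:R * r k) by rewrite -[B]subr0 -HB opprD addrA subrr add0r.
rewrite eA eB mulrSr; ring.
Qed.


From mathcomp Require Import zify.

Lemma CplusE (x y : CC) : Cplus x y = x + y. Proof. by []. Qed.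
Lemma CmultE (x y : CC) : Cmult x y = x * y. Proof. by []. Qed.
Lemma C0E : (RtoC 0 : CC) = 0. Proof. by []. Qed.
Lemma C1E : (RtoC 1 : CC) = 1. Proof. by []. Qed.

Definition Pr n (a : nat -> C) : {poly CC} :=
  \sum_(j < n.+1) ((a j : CC) *: 'X^j + (Cconj (a j) : CC) *: 'X^((2*n+1) - j)).

Lemma Pr_coef_low n a i : (i <= n)%N -> (Pr n a)`_i = a i.
Proof.
move=> hi; rewrite /Pr coef_sum (bigD1 (Ordinal (hi : (i < n.+1)%N))) //=.
rewrite coefD !coefZ !coefXn eqxx.
have -> : (i == 2 * n + 1 - i)%N = false by apply/eqP; lia.
rewrite mulr1 mulr0 addr0 big1 ?addr0 // => j hj.
rewrite coefD !coefZ !coefXn.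
have -> : (i == j)%N = false.
  apply/eqP => e; move: hj; rewrite -val_eqE /= e eqxx //.
have -> : (i == 2 * n + 1 - j)%N = false.
  have := ltn_ord j; move=> hj'; apply/eqP; lia.
by rewrite !mulr0 addr0.
Qed.

Lemma Pr_coef_high n a i : (2 * n + 1 < i)%N -> (Pr n a)`_i = 0.
Proof.
move=> hi; rewrite /Pr coef_sum big1 // => j _.
rewrite coefD !coefZ !coefXn.
have -> : (i == j)%N = false by have := ltn_ord j; move=> hj'; apply/eqP; lia.
have -> : (i == 2 * n + 1 - j)%N = false by apply/eqP; lia.
by rewrite !mulr0 addr0.
Qed.

Lemma Pr_size n a : (size (Pr n a) <= (2 * n + 1).+1)%N.
Proof. apply/leq_sizeP => j hj; apply: Pr_coef_high; lia. Qed.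

Lemma Pr_horner n a (x : CC) :
  (Pr n a).[x] = \sum_(j < n.+1) ((a j : CC) * x ^+ j + (Cconj (a j) : CC) * x ^+ (2*n+1 - j)).
Proof.
rewrite /Pr horner_sum; apply: eq_bigr => j _.
by rewrite hornerD !hornerZ !hornerXn.
Qed.

Lemma factor1 (x : CC) : x * (Cconj x : CC) = 1 ->
  1 - x *: 'X = (- x) *: ('X - (Cconj x : CC)%:P).
Proof.
move=> hx; rewrite scalerBr scaleNr scaleNr opprK -[x *: (_ %:P)]mul_polyC -polyCM hx polyC1.
by rewrite addrC.
Qed.

Lemma Rl_scale (l : seq CC) : (forall x, x \in l -> x * (Cconj x : CC) = 1) ->
  Rl l = (\prod_(x <- l) (- x)) *: \prod_(x <- l) ('X - (Cconj x : CC)%:P).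
Proof.
elim: l => [|y l IH] H; first by rewrite /Rl !big_nil scale1r.
rewrite /Rl !big_cons -/(Rl l) IH; last by move=> x hx; apply: H; rewrite in_cons hx orbT.
rewrite factor1; last by apply: H; rewrite in_cons eqxx.
by rewrite -scalerAl -scalerAr scalerA.
Qed.

Lemma Rl_coef0 (l : seq CC) : (Rl l)`_0 = 1.
Proof.
rewrite -horner_coef0 /Rl horner_prod; apply: big1 => x _.
by rewrite hornerD hornerN hornerZ hornerX hornerC mulr0 subr0.
Qed.


Lemma sum_iota_ord (F : nat -> CC) N : \sum_(j <- iota 0 N) F j = \sum_(i < N) F i.
Proof. by rewrite -(big_mkord xpredT) /index_iota subn0. Qed.

Lemma alg_main n (p a lam : nat -> C) :
  a 0%N = RtoC 1 ->
  (forall k, (k < n)%coq_nat ->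
     Cplus (Cmult (RtoC (INR (S k))) (a (S k)))
           (csum (fun m => Cmult (p m) (a (k - m)%coq_nat)) (S k)) = RtoC 0) ->
  (forall k, (1 <= k)%coq_nat /\ (k <= 2*n+1)%coq_nat -> Cmult (lam k) (Cconj (lam k)) = RtoC 1) ->
  (forall i j, (1 <= i)%coq_nat /\ (i <= 2*n+1)%coq_nat -> (1 <= j)%coq_nat /\ (j <= 2*n+1)%coq_nat ->
      i <> j -> lam i <> lam j) ->
  (forall k, (1 <= k)%coq_nat /\ (k <= 2*n+1)%coq_nat ->
     csum (fun j => Cplus (Cmult (a j) (Cpow (Cconj (lam k)) j))
                          (Cmult (Cconj (a j)) (Cpow (Cconj (lam k)) (2*n+1 - j)%coq_nat))) (S n) = RtoC 0) ->
  forall m, (m < n)%coq_nat ->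
  csum (fun k => Cpow (lam (S k)) (S m)) (2*n+1)%coq_nat = p m.
Proof.
move=> ha0 hrec hunit hdist hroot m hm.
pose l := [seq (lam k.+1 : CC) | k <- iota 0 (2*n+1)].
have hl : forall x, x \in l -> x * (Cconj x : CC) = 1.
  move=> x /mapP [k hk ->]; rewrite mem_iota in hk; apply: hunit; lia.
pose ms := [seq (Cconj x : CC) | x <- l].
have hroots : all (root (Pr n a)) ms.
  apply/allP => y /mapP [x /mapP [k hk ->] ->]; rewrite mem_iota in hk.
  have H := hroot k.+1 ltac:(lia).
  rewrite csum_big in H.
  rewrite /root Pr_horner; apply/eqP; rewrite -[RHS]H; apply: eq_bigr => j _.
  by rewrite CplusE !CmultE !Cpow_expr.
have huniq : uniq ms.
  rewrite /ms /l -map_comp map_inj_in_uniq ?iota_uniq // => i j hi hj /= e.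
  rewrite !mem_iota in hi hj.
  case: (eqVneq i j) => // hne; exfalso.
  apply: (hdist i.+1 j.+1 ltac:(lia) ltac:(lia) ltac:(move/eqP: hne; lia)).
  by rewrite -(Cconj_conj (lam i.+1)) e Cconj_conj.
have hur : uniq_roots ms by rewrite uniq_rootsE.
have [q hq] := uniq_roots_prod_XsubC hroots hur.
set Pi := \prod_(z <- ms) ('X - z%:P) in hq.
have hPi : size Pi = (2*n+1).+1 by rewrite size_prod_XsubC /ms /l !size_map size_iota.
have hPr0c : (Pr n a)`_0 = 1 by rewrite Pr_coef_low // ha0.
have hPr0 : Pr n a != 0.
  apply/eqP => e; move: hPr0c; rewrite e coef0 => /eqP; by rewrite eq_sym oner_eq0.
have hq0 : q != 0 by apply/eqP => e; move: hPr0; rewrite hq e mul0r eqxx.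
have hPi0 : Pi != 0 by rewrite -size_poly_eq0 hPi.
have hsq : (size q <= 1)%N.
  have := Pr_size n a; rewrite hq size_mul // hPi addnS /= => h.
  by rewrite -(leq_add2r (2*n+1)) add1n.
have hqc := size1_polyC hsq.
set c := q`_0 in hqc.
have hRl : Rl l = (\prod_(x <- l) - x) *: Pi by rewrite Rl_scale // /Pi /ms big_map.
set K := \prod_(x <- l) - x in hRl.
have e1 : K * Pi`_0 = 1 by rewrite -coefZ -hRl Rl_coef0.
have e2 : c * Pi`_0 = 1 by rewrite -hPr0c hq hqc coefCM.
have hPi00 : Pi`_0 != 0 by apply/eqP => e; move: e1; rewrite e mulr0 => /eqP; rewrite eq_sym oner_eq0.
have eKc : K = c by apply: (mulIf hPi00); rewrite e1 e2.
have HRP : Rl l = Pr n a by rewrite hRl hq hqc mul_polyC eKc.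
have newt : forall k, (k < n)%N ->
  \sum_(i < k.+1) psum l i.+1 * (a (k - i)%N : CC) + k.+1%:R * (a k.+1 : CC) = 0.
  move=> k hk; have := newton l k; rewrite HRP Pr_coef_low //.
  move=> H; apply: (eq_trans _ H); congr (_ + _); apply: eq_bigr => i _; rewrite Pr_coef_low //.
  have := ltn_ord i; lia.
have rec : forall k, (k < n)%N ->
  \sum_(i < k.+1) (p i : CC) * (a (k - i)%N : CC) + k.+1%:R * (a k.+1 : CC) = 0.
  move=> k hk; have H := hrec k ltac:(lia).
  rewrite csum_big INR_natr in H; rewrite addrC; apply: (eq_trans _ H).
  by congr (_ + _).
have key : forall k, (k < n)%N -> psum l k.+1 = p k.
  elim/ltn_ind => k IH hk.
  have H1 := newt k hk; have H2 := rec k hk.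
  rewrite big_ord_recr /= subnn ha0 in H1.
  rewrite big_ord_recr /= subnn ha0 in H2.
  have eS : \sum_(i < k) psum l (widen_ord (leqnSn k) i).+1 * (a (k - widen_ord (leqnSn k) i)%N : CC)
      = \sum_(i < k) (p (widen_ord (leqnSn k) i) : CC) * (a (k - widen_ord (leqnSn k) i)%N : CC).
    apply: eq_bigr => i _; rewrite IH //=; have := ltn_ord i; lia.
  rewrite eS in H1.
  move: H1 H2; set S := \sum_(i < k) _ ; set T := _ * (a k.+1 : CC).
  rewrite C1E !mulr1 => H1 H2.
  apply: (addIr T); apply: (addrI S); by rewrite !addrA H1 H2.
rewrite csum_big -(key m) ?(introT ltP hm) //.
rewrite /psum /l big_map.
rewrite sum_iota_ord.
by apply: eq_bigr => i _; rewrite Cpow_expr.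
Qed.

End Alg.

Lemma rhs_bound (n : nat) (x r : R) : (1 <= n)%nat -> 0 <= x -> 0 < r < 1 ->
  (4 * INR n + 5 / 2) * XB x n <=
  x ^ n / INR (fact n) * (15 / (1 - r ^ (n + 1))) * (INR n + 2 / (1 - r))
    * (1 + x * exp (x / r) / (r * INR n + r)).
Proof.
  intros Hn Hx Hr.
  set (A := x ^ n / INR (fact n)).
  assert (HA : 0 <= A).
  { unfold A. apply Rmult_le_pos; [apply pow_le; auto| left; apply Rinv_0_lt_compat, INR_fact_lt_0]. }
  pose proof (pos_INR n) as Hn0.
  assert (EX : XB x n = A * (1 + x * exp x / (INR n + 1))).
  { unfold XB, A. simpl pow. rewrite fact_simpl, mult_INR, S_INR.
    pose proof (INR_fact_lt_0 n). field. lra. }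
  rewrite EX.
  assert (Hrp : 0 < r ^ (n + 1) < 1).
  { split; [apply pow_lt; lra|].
    apply pow_lt_1_compat; [lra| lia]. }
  assert (H1 : 15 <= 15 / (1 - r ^ (n + 1))).
  { apply Rle_div_r; [lra|]. nra. }
  assert (H2 : INR n + 2 <= INR n + 2 / (1 - r)).
  { apply Rplus_le_compat_l. apply Rle_div_r; lra. }
  assert (H3 : 1 + x * exp x / (INR n + 1) <= 1 + x * exp (x / r) / (r * INR n + r)).
  { apply Rplus_le_compat_l. unfold Rdiv.
    rewrite !Rmult_assoc. apply Rmult_le_compat_l; auto.
    apply Rmult_le_compat.
    - left; apply exp_pos.
    - left; apply Rinv_0_lt_compat; lra.
    - apply exp_le_mono. apply Rle_div_r; [lra|]. nra.
    - apply Rinv_le_contravar; nra. }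
  assert (H4 : 4 * INR n + 5 / 2 <= 15 / (1 - r ^ (n + 1)) * (INR n + 2 / (1 - r))).
  { apply Rle_trans with (15 * (INR n + 2)); [lra|]. apply Rmult_le_compat; lra. }
  assert (HB : 0 <= 1 + x * exp x / (INR n + 1)).
  { assert (0 <= x * exp x / (INR n + 1)).
    { apply Rmult_le_pos; [apply Rmult_le_pos; [auto| left; apply exp_pos]| left; apply Rinv_0_lt_compat; lra]. }
    lra. }
  replace (A * (15 / (1 - r ^ (n + 1))) * (INR n + 2 / (1 - r)) * (1 + x * exp (x / r) / (r * INR n + r)))
    with ((15 / (1 - r ^ (n + 1)) * (INR n + 2 / (1 - r))) * (A * (1 + x * exp (x / r) / (r * INR n + r)))) by ring.
  apply Rmult_le_compat; [lra| apply Rmult_le_pos; auto| auto|].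
  apply Rmult_le_compat_l; auto.
Qed.

Theorem theorem2p1 (p : nat -> C)
  (hp : forall j : nat, Cmod (p j) <= / (INR j + 2) ^ 2)
  (n : nat) (hn : (1 <= n)%nat) :
  let N := (2 * n + 1)%nat in
  exists lam : nat -> C,
    (forall i j : nat, (1 <= i <= N)%nat -> (1 <= j <= N)%nat -> i <> j ->
       lam i <> lam j) /\
    (forall k : nat, (1 <= k <= N)%nat -> Cmod (lam k) = 1) /\
    (forall r : R, 0 < r < 1 -> forall z : C,
       Cmod (sum_n_m (fun k => (lam k * Cexp (lam k * z))%C) 1 N - fser p z)%C
       <= (Cmod z) ^ n / INR (fact n) * (15 / (1 - r ^ (n + 1)))
          * (INR n + 2 / (1 - r))
          * (1 + Cmod z * exp (Cmod z / r) / (r * INR n + r))).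
Proof.
  intros N.
  pose proof (aseq0 p) as ha0.
  pose proof (a_bound p hp n hn) as hU.
  exists (lamf n (aseq p) ha0 hU).
  split; [|split].
  - intros i j Hi Hj Hij. apply lamf_dist; auto.
  - intros k Hk. apply lamf_mod.
  - intros r Hr z.
    assert (Hps : forall m, (m < n)%nat ->
       csum (fun k => Cpow (lamf n (aseq p) ha0 hU (S k)) (S m)) (2 * n + 1) = p m).
    { intros m Hm. apply (@Alg.alg_main n p (aseq p) (lamf n (aseq p) ha0 hU)); auto.
      - intros k Hk. apply aseq_rec'.
      - intros k Hk. apply lamf_unit.
      - intros i j Hi Hj Hij. apply lamf_dist; auto.
      - intros k Hk. apply lamf_root. }
    eapply Rle_trans.
    + apply (final_bound p _ n z hn hp); auto. intros k Hk. apply lamf_mod.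
    + apply rhs_bound; auto. apply Cmod_ge_0.
Qed.
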